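(* Let $(X,\le)$ be a partially ordered set. Then a directed completion $(\overline X,\bar\le)$, $\iota:X\to\overline X$ of $X$ exists, and it is unique up to unique isomorphism. Moreover: (i) for every $x\in\overline X$ the set $\iota(X)\cap\downarrow x\subset\overline X$ has a tip, and this tip is $x$; (ii) for every dcpo $(Z,\le_Z)$ and every map $T:X\to Z$ with the Mcp, the unique map $\bar T:\overline X\to Z$ with the Mcp such that $\bar T\circ\iota=T$ is given by $$\bar T(\bar x)=\sup\{T(x):\ x\in X,\ \iota(x)\,\bar\le\,\bar x\}\qquad\forall\bar x\in\overline X,$$ where in particular this supremum exists in $Z$; (iii) an explicit realization is the following: let $Y:=\{A\subset X:\widehat A=A\}$ ordered by inclusion, let $\iota:X\to Y$, $\iota(x):=\downarrow x$, and let $\overline X$ be the directed-sup-closure of $\iota(X)$ computed in $Y$. With this choice, an element $A\in Y$ belongs to $\overline X$ if and only if the set $\{\iota(a):a\in A\}\subset Y$ has a tip in $Y$, and in this case this tip is $A$.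
   Context: Let $(X,\le)$ be a partially ordered set. A subset $D\subset X$ is directed if every finite subset of $D$ (including the empty one) has an upper bound in $D$; in particular directed sets are nonempty. $A\subset X$ is a lower set if $x\in A$ and $y\le x$ imply $y\in A$; $\downarrow A:=\{x\in X:x\le a\text{ for some }a\in A\}$ and $\downarrow a:=\downarrow\{a\}$. $(X,\le)$ is a directed complete partial order (dcpo) if every directed subset has a supremum. A subset $A\subset X$ is directed-sup-closed if the supremum of every directed $D\subset A$ which has a supremum in $X$ belongs to $A$. For $A\subset X$, $\overline A$ is the smallest directed-sup-closed subset of $X$ containing $A$, and $\widehat A$ is the smallest subset of $X$ containing $A$ which is both a lower set and directed-sup-closed. $A$ is dense if $\overline A=X$. $A$ has a tip if $\overline A$ has a maximum; this maximum is denoted ${\sf tip}\,A$. A map $T:X_1\to X_2$ between partially ordered sets has the Monotone Convergence Property (Mcp) if for every directed $D\subset X_1$ having a supremum, $T(D)$ has a supremum and $T(\sup D)=\sup T(D)$. A directed completion of $(X,\le)$ is a dcpo $(\overline X,\bar\le)$ together with a map $\iota:X\to\overline X$ with the Mcp such that for every dcpo $Z$ and every map $T:X\to Z$ with the Mcp there is a unique map $\bar T:\overline X\to Z$ with the Mcp satisfying $\bar T\circ\iota=T$. *)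

(* Defs.v *)
From Stdlib Require Import List FunctionalExtensionality PropExtensionality.


Definition is_porder {X : Type} (le : X -> X -> Prop) : Prop :=
  (forall x, le x x) /\
  (forall x y z, le x y -> le y z -> le x z) /\
  (forall x y, le x y -> le y x -> x = y).

Definition directed {X : Type} (le : X -> X -> Prop) (D : X -> Prop) : Prop :=
  forall l : list X, (forall x, In x l -> D x) ->
    exists u, D u /\ forall x, In x l -> le x u.

Definition is_sup {X : Type} (le : X -> X -> Prop) (A : X -> Prop) (s : X) : Prop :=
  (forall a, A a -> le a s) /\ (forall u, (forall a, A a -> le a u) -> le s u).

Definition is_dcpo {X : Type} (le : X -> X -> Prop) : Prop :=
  is_porder le /\ forall D, directed le D -> exists s, is_sup le D s.

Definition image {X Y : Type} (T : X -> Y) (D : X -> Prop) : Y -> Prop :=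
  fun y => exists x, D x /\ y = T x.

Definition Mcp {X1 X2 : Type} (le1 : X1 -> X1 -> Prop) (le2 : X2 -> X2 -> Prop)
  (T : X1 -> X2) : Prop :=
  forall D s, directed le1 D -> is_sup le1 D s -> is_sup le2 (image T D) (T s).

Definition lower_set {X : Type} (le : X -> X -> Prop) (A : X -> Prop) : Prop :=
  forall x y, A x -> le y x -> A y.

Definition down1 {X : Type} (le : X -> X -> Prop) (a : X) : X -> Prop :=
  fun x => le x a.

Definition dsup_closed {X : Type} (le : X -> X -> Prop) (A : X -> Prop) : Prop :=
  forall D, directed le D -> (forall d, D d -> A d) ->
    forall s, is_sup le D s -> A s.

Definition dclosure {X : Type} (le : X -> X -> Prop) (A : X -> Prop) : X -> Prop :=
  fun x => forall B, dsup_closed le B -> (forall a, A a -> B a) -> B x.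

Definition hat {X : Type} (le : X -> X -> Prop) (A : X -> Prop) : X -> Prop :=
  fun x => forall B, lower_set le B -> dsup_closed le B ->
    (forall a, A a -> B a) -> B x.

Definition tip_is {X : Type} (le : X -> X -> Prop) (A : X -> Prop) (t : X) : Prop :=
  dclosure le A t /\ forall y, dclosure le A y -> le y t.

Definition has_tip {X : Type} (le : X -> X -> Prop) (A : X -> Prop) : Prop :=
  exists t, tip_is le A t.

Definition directed_completion {X Xb : Type} (le : X -> X -> Prop)
  (leb : Xb -> Xb -> Prop) (iota : X -> Xb) : Prop :=
  is_dcpo leb /\ Mcp le leb iota /\
  forall (Z : Type) (leZ : Z -> Z -> Prop), is_dcpo leZ ->
    forall T : X -> Z, Mcp le leZ T ->
      (exists Tb : Xb -> Z, Mcp leb leZ Tb /\ forall x, Tb (iota x) = T x) /\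
      (forall Tb1 Tb2 : Xb -> Z,
         Mcp leb leZ Tb1 -> (forall x, Tb1 (iota x) = T x) ->
         Mcp leb leZ Tb2 -> (forall x, Tb2 (iota x) = T x) ->
         forall y, Tb1 y = Tb2 y).

Definition order_iso {X1 X2 : Type} (le1 : X1 -> X1 -> Prop) (le2 : X2 -> X2 -> Prop)
  (phi : X1 -> X2) : Prop :=
  (exists psi : X2 -> X1, (forall a, psi (phi a) = a) /\ (forall b, phi (psi b) = b)) /\
  (forall a b, le1 a b <-> le2 (phi a) (phi b)).

Definition Yset {X : Type} (le : X -> X -> Prop) : Type :=
  {A : X -> Prop | hat le A = A}.

Lemma hat_down1 {X : Type} (le : X -> X -> Prop) (H : is_porder le) (x : X) :
  hat le (down1 le x) = down1 le x.
Proof.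
  destruct H as [Hr [Ht Ha]].
  apply functional_extensionality; intro y; apply propositional_extensionality; split.
  - intro Hy; apply Hy.
    + intros u v Hu Hv; unfold down1 in *; eauto.
    + intros D _ HD s [_ Hs]; apply Hs; exact HD.
    + auto.
  - intros Hy B _ _ HB; auto.
Qed.

Definition iotaY {X : Type} (le : X -> X -> Prop) (H : is_porder le) (x : X) : Yset le :=
  exist _ (down1 le x) (hat_down1 le H x).

Definition leY {X : Type} (le : X -> X -> Prop) (A B : Yset le) : Prop :=
  forall x, proj1_sig A x -> proj1_sig B x.

Definition XbarP {X : Type} (le : X -> X -> Prop) (H : is_porder le) (A : Yset le) : Prop :=
  dclosure (leY le) (fun B => exists x, B = iotaY le H x) A.

Definition XbarT {X : Type} (le : X -> X -> Prop) (H : is_porder le) : Type :=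
  {A : Yset le | XbarP le H A}.

Lemma iotaY_XbarP {X : Type} (le : X -> X -> Prop) (H : is_porder le) (x : X) :
  XbarP le H (iotaY le H x).
Proof. intros B _ HB; apply HB; exists x; reflexivity. Qed.

Definition iotaXb {X : Type} (le : X -> X -> Prop) (H : is_porder le) (x : X) : XbarT le H :=
  exist _ (iotaY le H x) (iotaY_XbarP le H x).

Definition leXb {X : Type} (le : X -> X -> Prop) (H : is_porder le) (A B : XbarT le H) : Prop :=
  leY le (proj1_sig A) (proj1_sig B).

(* Main.v *)
Require Import Defs.
From Stdlib Require Import List FunctionalExtensionality PropExtensionality ProofIrrelevance IndefiniteDescription.

Lemma sig_eq {A : Type} {P : A -> Prop} (a b : sig P) : proj1_sig a = proj1_sig b -> a = b.
Proof. destruct a as [a pa], b as [b pb]; simpl; intro e; subst b; f_equal; apply proof_irrelevance. Qed.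

Lemma directed_intro {X} (le : X->X->Prop) (D : X->Prop) :
  (forall x y z, le x y -> le y z -> le x z) ->
  (exists d, D d) ->
  (forall a b, D a -> D b -> exists c, D c /\ le a c /\ le b c) ->
  directed le D.
Proof.
  intros Ht [d0 Hd0] Hb l. induction l as [|x l IH]; intros Hl.
  - exists d0; split; [exact Hd0| intros x []].
  - destruct IH as [u [Hu Hlu]]. { intros y Hy; apply Hl; right; exact Hy. }
    destruct (Hb x u (Hl x (or_introl eq_refl)) Hu) as [c [Hc [Hxc Huc]]].
    exists c; split; [exact Hc|]. intros y [Hy|Hy]; [subst y; exact Hxc| eauto].
Qed.

Lemma directed_ne {X} le (D : X -> Prop) : directed le D -> exists d, D d.
Proof. intros H; destruct (H nil) as [u [Hu _]]; [intros x []| eauto]. Qed.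

Lemma directed_pair {X} le (D : X -> Prop) : directed le D ->
  forall a b, D a -> D b -> exists c, D c /\ le a c /\ le b c.
Proof.
  intros H a b Ha Hb. destruct (H (a :: b :: nil)) as [u [Hu Hl]].
  - intros x [e|[e|[]]]; subst; assumption.
  - exists u; split; [exact Hu| split; apply Hl; simpl; auto].
Qed.

Lemma sup_unique {X} (le : X->X->Prop) (A : X -> Prop) s t :
  is_porder le -> is_sup le A s -> is_sup le A t -> s = t.
Proof. intros [_ [_ Ha]] [Hs1 Hs2] [Ht1 Ht2]. apply Ha; [apply Hs2; exact Ht1| apply Ht2; exact Hs1]. Qed.

Lemma is_sup_ext {X} (le : X->X->Prop) (A B : X -> Prop) s :
  (forall z, A z <-> B z) -> is_sup le A s -> is_sup le B s.
Proof. intros E [H1 H2]; split; [intros a Ha; apply H1, E, Ha | intros u Hu; apply H2; intros a Ha; apply Hu, E, Ha]. Qed.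

Lemma mcp_mono {X1 X2} (le1 : X1->X1->Prop) (le2 : X2->X2->Prop) T :
  is_porder le1 -> Mcp le1 le2 T -> forall x y, le1 x y -> le2 (T x) (T y).
Proof.
  intros [Hr [Ht _]] HM x y Hxy.
  assert (HD : directed le1 (fun z => z = x \/ z = y)).
  { apply directed_intro; [exact Ht| exists x; left; reflexivity|].
    intros a b Ha Hb; exists y; split; [right; reflexivity|].
    split; [destruct Ha; subst; auto | destruct Hb; subst; auto]. }
  assert (HS : is_sup le1 (fun z => z = x \/ z = y) y).
  { split; [intros a [e|e]; subst; auto| intros u Hu; apply Hu; right; reflexivity]. }
  destruct (HM _ _ HD HS) as [H1 _]. apply H1. exists x; split; [left; reflexivity| reflexivity].
Qed.

Lemma directed_image {X1 X2} (le1 : X1->X1->Prop) (le2 : X2->X2->Prop) (f : X1 -> X2) D :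
  (forall x y z, le2 x y -> le2 y z -> le2 x z) ->
  (forall x y, le1 x y -> le2 (f x) (f y)) -> directed le1 D -> directed le2 (image f D).
Proof.
  intros Ht Hm HD. apply directed_intro; [exact Ht| |].
  - destruct (directed_ne _ _ HD) as [d Hd]; exists (f d), d; split; [exact Hd| reflexivity].
  - intros a b [x [Hx ->]] [y [Hy ->]].
    destruct (directed_pair _ _ HD x y Hx Hy) as [c [Hc [H1 H2]]].
    exists (f c); split; [exists c; split; [exact Hc|reflexivity]| split; auto].
Qed.

Lemma mcp_comp {X1 X2 X3} (le1 : X1->X1->Prop) (le2 : X2->X2->Prop) (le3 : X3->X3->Prop) f g :
  is_porder le1 -> is_porder le2 -> Mcp le1 le2 f -> Mcp le2 le3 g -> Mcp le1 le3 (fun x => g (f x)).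
Proof.
  intros P1 P2 Hf Hg D s HD Hs.
  assert (HD' : directed le2 (image f D)).
  { apply directed_image with le1; [apply P2| apply (mcp_mono le1 le2 f P1 Hf)| exact HD]. }
  apply is_sup_ext with (image g (image f D)).
  - intros z; split.
    + intros [y [[x [Hx ->]] ->]]; exists x; split; auto.
    + intros [x [Hx ->]]; exists (f x); split; [exists x; split; auto| reflexivity].
  - apply Hg; [exact HD'| apply Hf; assumption].
Qed.

Lemma mcp_id {X} (le : X -> X -> Prop) : Mcp le le (fun x => x).
Proof.
  intros D s HD Hs. apply is_sup_ext with D; [|exact Hs].
  intros z; split; [intros Hz; exists z; split; auto| intros [x [Hx ->]]; exact Hx].
Qed.

Lemma iso_mcp {X1 X2} (le1 : X1->X1->Prop) (le2 : X2->X2->Prop) phi :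
  order_iso le1 le2 phi -> Mcp le1 le2 phi.
Proof.
  intros [[psi [H1 H2]] Hle] D s HD [Hs1 Hs2]. split.
  - intros a [x [Hx ->]]. apply Hle, Hs1, Hx.
  - intros u Hu. rewrite <- (H2 u). apply Hle. apply Hs2. intros a Ha.
    apply Hle. rewrite H2. apply Hu. exists a; split; auto.
Qed.

Lemma dclosure_incl {X} (le : X->X->Prop) R x : R x -> dclosure le R x.
Proof. intros H B _ HB; apply HB, H. Qed.

Lemma dclosure_dsup {X} (le : X->X->Prop) R : dsup_closed le (dclosure le R).
Proof. intros D HD HDc s Hs B HB HRB. apply (HB D HD); [intros d Hd; apply HDc; auto | exact Hs]. Qed.

Lemma dclosure_mono {X} (le : X->X->Prop) (R R' : X -> Prop) :
  (forall x, R x -> R' x) -> forall x, dclosure le R x -> dclosure le R' x.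
Proof. intros H x Hx B HB HR'; apply Hx; [exact HB| intros; apply HR'; apply H; auto]. Qed.

Lemma agree_dclosure {X1 X2} (le1 : X1->X1->Prop) (le2 : X2->X2->Prop) f g R :
  is_porder le2 -> Mcp le1 le2 f -> Mcp le1 le2 g -> (forall x, R x -> f x = g x) ->
  forall x, dclosure le1 R x -> f x = g x.
Proof.
  intros P2 Hf Hg HR x Hx. apply (Hx (fun x => f x = g x)); [|exact HR].
  intros D HD HDe s Hs. apply sup_unique with le2 (image f D); [exact P2| apply Hf; auto|].
  apply is_sup_ext with (image g D); [|apply Hg; auto].
  intros z; split; intros [y [Hy ->]]; exists y; split; auto; rewrite (HDe y Hy); reflexivity.
Qed.

Definition suble {P} (le : P->P->Prop) (C : P -> Prop) (a b : sig C) : Prop :=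
  le (proj1_sig a) (proj1_sig b).

Lemma sub_porder {P} (le : P->P->Prop) C : is_porder le -> is_porder (suble le C).
Proof.
  intros [Hr [Ht Ha]]; unfold suble; split; [|split].
  - intros; apply Hr.
  - intros; eauto.
  - intros a b H1 H2; apply sig_eq; auto.
Qed.

Lemma sub_sup {P} (le : P->P->Prop) (C : P -> Prop) :
  is_porder le -> dsup_closed le C ->
  (forall D, directed le D -> (forall d, D d -> C d) -> exists s, is_sup le D s) ->
  forall D', directed (suble le C) D' ->
  exists s (Cs : C s), is_sup le (image (@proj1_sig _ C) D') s /\
                       is_sup (suble le C) D' (exist _ s Cs).
Proof.
  intros HP HC Hex D' HD'.
  assert (HDp : directed le (image (@proj1_sig _ C) D')).
  { apply directed_image with (suble le C); [apply HP| |exact HD']. intros; assumption. }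
  assert (HDC : forall d, image (@proj1_sig _ C) D' d -> C d).
  { intros d [a [_ ->]]; apply proj2_sig. }
  destruct (Hex _ HDp HDC) as [s Hs].
  assert (Cs : C s) by (apply (HC _ HDp HDC s Hs)).
  exists s, Cs; split; [exact Hs|]. split.
  - intros a Ha. unfold suble; simpl. apply (proj1 Hs). exists a; split; auto.
  - intros u Hu. unfold suble; simpl. apply (proj2 Hs). intros d [a [Ha ->]]. apply Hu, Ha.
Qed.

Lemma sub_dense {P} (le : P->P->Prop) (R : P -> Prop) :
  (forall x y z, le x y -> le y z -> le x z) ->
  forall a : sig (dclosure le R),
    dclosure (suble le (dclosure le R)) (fun b => R (proj1_sig b)) a.
Proof.
  intros Ht [p Hp] Q HQ HRQ.
  assert (H : dclosure le R p /\ forall h, Q (exist _ p h)).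
  { apply Hp.
    - intros D HD HDQ s Hs.
      assert (Cs : dclosure le R s).
      { apply (dclosure_dsup le R D HD); [intros d Hd; apply (proj1 (HDQ d Hd))| exact Hs]. }
      split; [exact Cs|]. intros h.
      apply (HQ (fun a => D (proj1_sig a))).
      + apply directed_intro.
        * unfold suble; intros; eauto.
        * destruct (directed_ne _ _ HD) as [d Hd]. exists (exist _ d (proj1 (HDQ d Hd))). exact Hd.
        * intros [a ha] [b hb] Ha Hb; simpl in *.
          destruct (directed_pair _ _ HD a b Ha Hb) as [c [Hc [H1 H2]]].
          exists (exist _ c (proj1 (HDQ c Hc))); simpl; auto.
      + intros [d hd] Hd; simpl in Hd. apply (proj2 (HDQ d Hd)).
      + split.
        * intros [d hd] Hd; unfold suble; simpl in *. apply (proj1 Hs), Hd.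
        * intros u Hu; unfold suble; simpl. apply (proj2 Hs). intros d Hd.
          apply (Hu (exist _ d (proj1 (HDQ d Hd)))). exact Hd.
    - intros r Hr; split; [apply dclosure_incl, Hr| intros h; apply HRQ; exact Hr]. }
  apply (proj2 H).
Qed.

Lemma hat_incl {X} (le : X->X->Prop) A x : A x -> hat le A x.
Proof. intros H B _ _ HB; apply HB, H. Qed.

Lemma hat_lower {X} (le : X->X->Prop) A : lower_set le (hat le A).
Proof. intros x y Hx Hyx B HBl HBd HB. apply (HBl x y); [apply Hx; auto| exact Hyx]. Qed.

Lemma hat_dsup {X} (le : X->X->Prop) A : dsup_closed le (hat le A).
Proof. intros D HD HDh s Hs B HBl HBd HB. apply (HBd D HD); [intros d Hd; apply HDh; auto| exact Hs]. Qed.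

Lemma hat_least {X} (le : X->X->Prop) (A B : X -> Prop) :
  lower_set le B -> dsup_closed le B -> (forall x, A x -> B x) -> forall x, hat le A x -> B x.
Proof. intros H1 H2 H3 x Hx; apply Hx; auto. Qed.

Lemma hat_idem {X} (le : X->X->Prop) A : hat le (hat le A) = hat le A.
Proof.
  apply functional_extensionality; intro x; apply propositional_extensionality; split.
  - apply hat_least; [apply hat_lower| apply hat_dsup| auto].
  - apply hat_incl.
Qed.

Lemma Y_lower {X} (le : X->X->Prop) (A : Yset le) : lower_set le (proj1_sig A).
Proof. destruct A as [A e]; simpl; rewrite <- e; apply hat_lower. Qed.

Lemma Y_dsup {X} (le : X->X->Prop) (A : Yset le) : dsup_closed le (proj1_sig A).
Proof. destruct A as [A e]; simpl; rewrite <- e; apply hat_dsup. Qed.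

Definition Ucup {X} (le : X->X->Prop) (F : Yset le -> Prop) : X -> Prop :=
  fun x => exists B, F B /\ proj1_sig B x.

Definition sY {X} (le : X->X->Prop) (F : Yset le -> Prop) : Yset le :=
  exist _ (hat le (Ucup le F)) (hat_idem le (Ucup le F)).

Lemma sY_sup {X} (le : X->X->Prop) F : is_sup (leY le) F (sY le F).
Proof.
  split.
  - intros B HB x Hx. simpl. apply hat_incl. exists B; auto.
  - intros U HU x Hx. simpl in Hx. revert x Hx.
    apply hat_least; [apply Y_lower| apply Y_dsup|].
    intros x [B [HB HBx]]. apply (HU B HB x HBx).
Qed.

Lemma Ysup_sub {X} (le : X->X->Prop) F s :
  is_sup (leY le) F s -> forall x, proj1_sig s x -> hat le (Ucup le F) x.
Proof. intros Hs x Hx. apply ((proj2 Hs) (sY le F) (proj1 (sY_sup le F)) x Hx). Qed.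

Lemma leY_porder {X} (le : X->X->Prop) : is_porder (leY le).
Proof.
  unfold leY; split; [|split].
  - auto.
  - intros; auto.
  - intros a b H1 H2. apply sig_eq. apply functional_extensionality; intro x;
    apply propositional_extensionality; split; auto.
Qed.

Lemma Y_has_sups {X} (le : X->X->Prop) (C : Yset le -> Prop) :
  forall D, directed (leY le) D -> (forall d, D d -> C d) -> exists s, is_sup (leY le) D s.
Proof. intros D _ _; exists (sY le D); apply sY_sup. Qed.

Lemma XbarP_dsup {X} (le : X->X->Prop) H : dsup_closed (leY le) (XbarP le H).
Proof. apply dclosure_dsup. Qed.

Lemma Xb_sup {X} (le : X->X->Prop) H :
  forall D', directed (leXb le H) D' ->
  exists s (Cs : XbarP le H s), is_sup (leY le) (image (@proj1_sig _ (XbarP le H)) D') s /\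
                       is_sup (leXb le H) D' (exist _ s Cs).
Proof. apply (sub_sup (leY le) (XbarP le H) (leY_porder le) (XbarP_dsup le H) (Y_has_sups le _)). Qed.

Lemma leXb_porder {X} (le : X->X->Prop) H : is_porder (leXb le H).
Proof. apply (sub_porder (leY le) (XbarP le H) (leY_porder le)). Qed.

Lemma Xb_dcpo {X} (le : X->X->Prop) H : is_dcpo (leXb le H).
Proof.
  split; [apply leXb_porder|]. intros D HD. destruct (Xb_sup le H D HD) as [s [Cs [_ Hs]]].
  eexists; exact Hs.
Qed.

Lemma Xb_proj_mcp {X} (le : X->X->Prop) H : Mcp (leXb le H) (leY le) (@proj1_sig _ (XbarP le H)).
Proof.
  intros D s HD Hs. destruct (Xb_sup le H D HD) as [s' [Cs [H1 H2]]].
  rewrite (sup_unique _ _ _ _ (leXb_porder le H) Hs H2). exact H1.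
Qed.

Lemma iotaXb_mcp {X} (le : X->X->Prop) H : Mcp le (leXb le H) (iotaXb le H).
Proof.
  intros D x HD Hx. split.
  - intros a [d [Hd ->]]. unfold leXb, leY; simpl. unfold down1. intros y Hy.
    destruct H as [_ [Ht _]]. eapply Ht; [exact Hy| apply (proj1 Hx), Hd].
  - intros u Hu. unfold leXb, leY; simpl. unfold down1. intros y Hy.
    apply (Y_lower le (proj1_sig u) x); [|exact Hy].
    apply (Y_dsup le (proj1_sig u) D HD); [|exact Hx].
    intros d Hd. apply (Hu (iotaXb le H d)); [exists d; split; auto|]. simpl; unfold down1.
    apply (proj1 H).
Qed.

Lemma T_hat {X Z} (le : X->X->Prop) (leZ : Z->Z->Prop) (H : is_porder le) (HZ : is_dcpo leZ) T :
  Mcp le leZ T -> forall t (A : X -> Prop), (forall x, A x -> leZ (T x) t) ->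
  forall x, hat le A x -> leZ (T x) t.
Proof.
  intros HT t A HA. apply hat_least; [| |exact HA].
  - intros x y Hx Hyx. destruct HZ as [[_ [Ht _]] _]. eapply Ht; [|exact Hx].
    apply (mcp_mono le leZ T H HT _ _ Hyx).
  - intros D HD HDB s Hs. apply (proj2 (HT D s HD Hs)). intros a [d [Hd ->]]. apply HDB, Hd.
Qed.

Definition Wset {X Z} (le : X->X->Prop) (leZ : Z->Z->Prop) (T : X -> Z) (F : Yset le -> Prop) : Z -> Prop :=
  fun z => exists A, F A /\ is_sup leZ (image T (proj1_sig A)) z.

Lemma core {X Z} (le : X->X->Prop) (leZ : Z->Z->Prop) (H : is_porder le) (HZ : is_dcpo leZ) T :
  Mcp le leZ T -> forall (F : Yset le -> Prop) s0, directed (leY le) F -> is_sup (leY le) F s0 ->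
  (forall A, F A -> exists z, is_sup leZ (image T (proj1_sig A)) z) ->
  directed leZ (Wset le leZ T F) /\
  forall t, is_sup leZ (Wset le leZ T F) t -> is_sup leZ (image T (proj1_sig s0)) t.
Proof.
  intros HT F s0 HF Hs0 Hex.
  destruct HZ as [[HZr [HZt HZa]] HZs].
  split.
  - apply directed_intro; [exact HZt| |].
    + destruct (directed_ne _ _ HF) as [A HA]. destruct (Hex A HA) as [z Hz].
      exists z, A; auto.
    + intros z1 z2 [A1 [HA1 Hz1]] [A2 [HA2 Hz2]].
      destruct (directed_pair _ _ HF A1 A2 HA1 HA2) as [A3 [HA3 [H13 H23]]].
      destruct (Hex A3 HA3) as [z3 Hz3].
      exists z3; split; [exists A3; auto|]. split.
      * apply (proj2 Hz1). intros a [x [Hx ->]]. apply (proj1 Hz3). exists x; split; auto.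
      * apply (proj2 Hz2). intros a [x [Hx ->]]. apply (proj1 Hz3). exists x; split; auto.
  - intros t Ht. split.
    + intros a [x [Hx ->]]. apply (T_hat le leZ H (conj (conj HZr (conj HZt HZa)) HZs) T HT t (Ucup le F)).
      * intros y [B [HB HBy]]. destruct (Hex B HB) as [z Hz].
        apply HZt with z; [apply (proj1 Hz); exists y; split; auto| apply (proj1 Ht); exists B; auto].
      * apply (Ysup_sub le F s0 Hs0 x Hx).
    + intros u Hu. apply (proj2 Ht). intros z [A [HA Hz]].
      apply (proj2 Hz). intros a [x [Hx ->]]. apply Hu. exists x; split; auto.
      apply (proj1 Hs0 A HA x Hx).
Qed.

Lemma ex_sup {X Z} (le : X->X->Prop) (leZ : Z->Z->Prop) (H : is_porder le) (HZ : is_dcpo leZ) T :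
  Mcp le leZ T -> forall A : Yset le, XbarP le H A -> exists z, is_sup leZ (image T (proj1_sig A)) z.
Proof.
  intros HT A HA. apply HA.
  - intros F HF HFs s0 Hs0. destruct (core le leZ H HZ T HT F s0 HF Hs0 HFs) as [Hd Hc].
    destruct (proj2 HZ _ Hd) as [t Ht]. exists t; apply Hc; exact Ht.
  - intros B [x ->]. exists (T x). split.
    + intros a [y [Hy ->]]. simpl in Hy. unfold down1 in Hy. apply (mcp_mono le leZ T H HT _ _ Hy).
    + intros u Hu. apply Hu. exists x; split; [simpl; unfold down1; apply (proj1 H)| reflexivity].
Qed.

Definition Tb {X Z} (le : X->X->Prop) (leZ : Z->Z->Prop) (H : is_porder le) (HZ : is_dcpo leZ) T
  (HT : Mcp le leZ T) (A : XbarT le H) : Z :=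
  proj1_sig (constructive_indefinite_description _
     (ex_sup le leZ H HZ T HT (proj1_sig A) (proj2_sig A))).

Lemma Tb_spec {X Z} (le : X->X->Prop) (leZ : Z->Z->Prop) (H : is_porder le) (HZ : is_dcpo leZ) T
  (HT : Mcp le leZ T) (A : XbarT le H) :
  is_sup leZ (image T (proj1_sig (proj1_sig A))) (Tb le leZ H HZ T HT A).
Proof. unfold Tb. apply proj2_sig. Qed.

Lemma Tb_iota {X Z} (le : X->X->Prop) (leZ : Z->Z->Prop) (H : is_porder le) (HZ : is_dcpo leZ) T
  (HT : Mcp le leZ T) x : Tb le leZ H HZ T HT (iotaXb le H x) = T x.
Proof.
  apply (sup_unique leZ (image T (down1 le x))); [apply HZ| exact (Tb_spec le leZ H HZ T HT (iotaXb le H x))|]. split.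
  - intros a [y [Hy ->]]. apply (mcp_mono le leZ T H HT _ _ Hy).
  - intros u Hu. apply Hu. exists x; split; [unfold down1; apply (proj1 H)| reflexivity].
Qed.

Lemma Tb_mcp {X Z} (le : X->X->Prop) (leZ : Z->Z->Prop) (H : is_porder le) (HZ : is_dcpo leZ) T
  (HT : Mcp le leZ T) : Mcp (leXb le H) leZ (Tb le leZ H HZ T HT).
Proof.
  intros D s HD Hs.
  set (F := image (@proj1_sig _ (XbarP le H)) D).
  assert (HF : directed (leY le) F).
  { apply directed_image with (leXb le H); [apply (leY_porder le)| |exact HD]. intros; assumption. }
  assert (HsF : is_sup (leY le) F (proj1_sig s)) by (apply Xb_proj_mcp; assumption).
  assert (Hex : forall A, F A -> exists z, is_sup leZ (image T (proj1_sig A)) z).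
  { intros A [a [_ ->]]. exists (Tb le leZ H HZ T HT a). apply Tb_spec. }
  destruct (core le leZ H HZ T HT F (proj1_sig s) HF HsF Hex) as [Hd Hc].
  destruct (proj2 HZ _ Hd) as [t Ht].
  assert (E : Tb le leZ H HZ T HT s = t).
  { apply (sup_unique leZ (image T (proj1_sig (proj1_sig s)))); [apply HZ| apply Tb_spec| apply Hc, Ht]. }
  rewrite E. apply is_sup_ext with (Wset le leZ T F); [|exact Ht].
  intros z; split.
  - intros [A [[a [Ha ->]] Hz]]. exists a; split; [exact Ha|].
    apply (sup_unique leZ (image T (proj1_sig (proj1_sig a)))); [apply HZ| exact Hz| apply Tb_spec].
  - intros [a [Ha ->]]. exists (proj1_sig a); split; [exists a; split; auto| apply Tb_spec].
Qed.

Lemma Xb_dense {X} (le : X->X->Prop) H (a : XbarT le H) :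
  dclosure (leXb le H) (fun b => exists x, proj1_sig b = iotaY le H x) a.
Proof.
  apply (sub_dense (leY le) (fun B => exists x, B = iotaY le H x)).
  unfold leY; intros; auto.
Qed.

Lemma Xb_completion {X} (le : X->X->Prop) H : directed_completion le (leXb le H) (iotaXb le H).
Proof.
  split; [apply Xb_dcpo| split; [apply iotaXb_mcp|]].
  intros Z leZ HZ T HT. split.
  - exists (Tb le leZ H HZ T HT). split; [apply Tb_mcp| apply Tb_iota].
  - intros Tb1 Tb2 H1 E1 H2 E2 y.
    apply (agree_dclosure (leXb le H) leZ Tb1 Tb2 (fun b => exists x, proj1_sig b = iotaY le H x) (proj1 HZ) H1 H2); [|apply Xb_dense].
    intros b [x Hx]. assert (b = iotaXb le H x) by (apply sig_eq; exact Hx). subst b.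
    rewrite E1, E2; reflexivity.
Qed.

Lemma comp_dense {X Xb} (le : X->X->Prop) (leb : Xb->Xb->Prop) iota :
  is_porder le -> directed_completion le leb iota ->
  forall xb, dclosure leb (fun y => exists a, y = iota a) xb.
Proof.
  intros H [HXb [Hi HU]] xb.
  set (R := fun y : Xb => exists a, y = iota a).
  set (C := dclosure leb R).
  assert (HP : is_porder (suble leb C)) by (apply sub_porder, HXb).
  assert (Hsup := sub_sup leb C (proj1 HXb) (dclosure_dsup leb R)
                     (fun D HD _ => proj2 HXb D HD)).
  assert (Hdc : is_dcpo (suble leb C)).
  { split; [exact HP|]. intros D HD. destruct (Hsup D HD) as [s [Cs [_ Hs]]]. eexists; exact Hs. }
  assert (Hj : Mcp (suble leb C) leb (@proj1_sig _ C)).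
  { intros D s HD Hs. destruct (Hsup D HD) as [s' [Cs [H1 H2]]].
    rewrite (sup_unique _ _ _ _ HP Hs H2). exact H1. }
  set (iota' := fun x => exist C (iota x) (dclosure_incl leb R (iota x) (ex_intro _ x eq_refl))).
  assert (Hi' : Mcp le (suble leb C) iota').
  { intros D s HD Hs. destruct (Hi D s HD Hs) as [H1 H2]. split.
    - intros a [d [Hd ->]]. unfold suble; simpl. apply H1. exists d; split; auto.
    - intros u Hu. unfold suble; simpl. apply H2. intros a [d [Hd ->]].
      apply (Hu (iota' d)). exists d; split; auto. }
  destruct (HU _ _ Hdc iota' Hi') as [[r [Hr Er]] _].
  assert (Hjr : Mcp leb leb (fun y => proj1_sig (r y))).
  { apply (mcp_comp leb (suble leb C) leb r (@proj1_sig _ C) (proj1 HXb) HP Hr Hj). }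
  destruct (HU _ _ HXb iota Hi) as [_ Huniq].
  assert (E : proj1_sig (r xb) = xb).
  { apply (Huniq (fun y => proj1_sig (r y)) (fun y => y) Hjr); [| apply mcp_id| reflexivity].
    intros x; rewrite Er; reflexivity. }
  rewrite <- E. apply (proj2_sig (r xb)).
Qed.

Lemma comp_tip {X Xb} (le : X->X->Prop) (leb : Xb->Xb->Prop) iota :
  is_porder le -> directed_completion le leb iota ->
  forall xb, tip_is leb (fun y => (exists a, y = iota a) /\ leb y xb) xb.
Proof.
  intros H HC xb. destruct (proj1 (proj1 HC)) as [Hr [Ht Ha]].
  split.
  - apply (comp_dense le leb iota H HC xb (fun z => dclosure leb (fun y => (exists a, y = iota a) /\ leb y z) z)).
    + intros D HD HDS s Hs. apply (dclosure_dsup _ _ D HD); [|exact Hs].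
      intros d Hd. apply (dclosure_mono _ (fun y => (exists a, y = iota a) /\ leb y d)); [|apply HDS, Hd].
      intros y [Hy Hyd]. split; [exact Hy| eapply Ht; [exact Hyd| apply (proj1 Hs d Hd)]].
    + intros z [a ->]. apply dclosure_incl. split; [exists a; reflexivity| apply Hr].
  - intros y Hy. apply (Hy (fun y => leb y xb)).
    + intros D HD HDB s Hs. apply (proj2 Hs). exact HDB.
    + intros z [_ Hz]; exact Hz.
Qed.

Lemma comp_ext {X Xb} (le : X->X->Prop) (leb : Xb->Xb->Prop) iota :
  is_porder le -> directed_completion le leb iota ->
  forall (Z : Type) (leZ : Z -> Z -> Prop), is_dcpo leZ ->
  forall T : X -> Z, Mcp le leZ T ->
  forall Tb : Xb -> Z, Mcp leb leZ Tb -> (forall x, Tb (iota x) = T x) ->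
  forall xb : Xb, is_sup leZ (fun z => exists x, leb (iota x) xb /\ z = T x) (Tb xb).
Proof.
  intros H HC Z leZ HZ T HT Tb HTb E xb.
  assert (HP := proj1 (proj1 HC)).
  destruct HZ as [[HZr [HZt HZa]] _].
  split.
  - intros a [x [Hx ->]]. rewrite <- E. apply (mcp_mono leb leZ Tb HP HTb _ _ Hx).
  - intros u Hu. destruct (comp_tip le leb iota H HC xb) as [Hd _].
    apply (Hd (fun y => leZ (Tb y) u)).
    + intros D HD HDB s Hs. apply (proj2 (HTb D s HD Hs)). intros a [d [Hd' ->]]. apply HDB, Hd'.
    + intros y [[a ->] Hay]. rewrite E. apply Hu. exists a; auto.
Qed.

Lemma comp_unique {X X1 X2} (le : X->X->Prop) (le1 : X1 -> X1 -> Prop) (i1 : X -> X1)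
   (le2 : X2 -> X2 -> Prop) (i2 : X -> X2) :
   directed_completion le le1 i1 -> directed_completion le le2 i2 ->
      (exists phi : X1 -> X2, order_iso le1 le2 phi /\ forall x, phi (i1 x) = i2 x) /\
      (forall phi psi : X1 -> X2,
          order_iso le1 le2 phi -> (forall x, phi (i1 x) = i2 x) ->
          order_iso le1 le2 psi -> (forall x, psi (i1 x) = i2 x) ->
          forall y, phi y = psi y).
Proof.
  intros [D1 [M1 U1]] [D2 [M2 U2]]. split.
  - destruct (U1 _ _ D2 i2 M2) as [[phi [Hphi Ephi]] _].
    destruct (U2 _ _ D1 i1 M1) as [[psi [Hpsi Epsi]] _].
    assert (E1 : forall a, psi (phi a) = a).
    { intros a. apply (proj2 (U1 _ _ D1 i1 M1) (fun y => psi (phi y)) (fun y => y)).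
      - apply (mcp_comp le1 le2 le1); auto; [apply D1| apply D2].
      - intros x; rewrite Ephi, Epsi; reflexivity.
      - apply mcp_id.
      - reflexivity. }
    assert (E2 : forall b, phi (psi b) = b).
    { intros b. apply (proj2 (U2 _ _ D2 i2 M2) (fun y => phi (psi y)) (fun y => y)).
      - apply (mcp_comp le2 le1 le2); auto; [apply D2| apply D1].
      - intros x; rewrite Epsi, Ephi; reflexivity.
      - apply mcp_id.
      - reflexivity. }
    exists phi; split; [|exact Ephi]. split; [exists psi; auto|].
    intros a b; split.
    + apply (mcp_mono le1 le2 phi (proj1 D1) Hphi).
    + intros Hab. rewrite <- (E1 a), <- (E1 b). apply (mcp_mono le2 le1 psi (proj1 D2) Hpsi), Hab.
  - intros phi psi Hphi Ephi Hpsi Epsi y.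
    apply (proj2 (U1 _ _ D2 i2 M2) phi psi (iso_mcp _ _ _ Hphi) Ephi (iso_mcp _ _ _ Hpsi) Epsi).
Qed.

Definition GA {X} (le : X->X->Prop) (H : is_porder le) (A : Yset le) : Yset le -> Prop :=
  fun B => exists a, proj1_sig A a /\ B = iotaY le H a.

Lemma G_below {X} (le : X->X->Prop) H (A : Yset le) B :
  dclosure (leY le) (GA le H A) B -> leY le B A.
Proof.
  intros HB. apply (HB (fun B => leY le B A)).
  - intros D HD HDB s Hs. apply (proj2 Hs), HDB.
  - intros C [a [Ha ->]] x Hx. simpl in Hx. unfold down1 in Hx. apply (Y_lower le A a x Ha Hx).
Qed.

Lemma G_tip {X} (le : X->X->Prop) H (A : Yset le) :
  XbarP le H A -> dclosure (leY le) (GA le H A) A.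
Proof.
  intros HA. apply (HA (fun B => dclosure (leY le) (GA le H B) B)).
  - intros D HD HDS s Hs. apply (dclosure_dsup _ _ D HD); [|exact Hs].
    intros d Hd. apply (dclosure_mono _ (GA le H d)); [|apply HDS, Hd].
    intros B [a [Ha ->]]. exists a; split; [apply (proj1 Hs d Hd a Ha)| reflexivity].
  - intros B [x ->]. apply dclosure_incl. exists x; split; [simpl; unfold down1; apply (proj1 H)| reflexivity].
Qed.

Lemma tip_char {X} (le : X->X->Prop) H (A : Yset le) t :
  tip_is (leY le) (GA le H A) t -> t = A /\ XbarP le H A.
Proof.
  intros [Ht Hmax].
  assert (E : t = A).
  { apply (proj2 (proj2 (leY_porder le))).
    - apply G_below with H; exact Ht.
    - intros a Ha. apply (Hmax (iotaY le H a)).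
      + apply dclosure_incl. exists a; auto.
      + simpl; unfold down1; apply (proj1 H). }
  split; [exact E|]. rewrite <- E. unfold XbarP.
  apply (dclosure_mono _ (GA le H A)); [|exact Ht].
  intros B [a [_ ->]]. exists a; reflexivity.
Qed.
Theorem mainTheorem1 (X : Type) (le : X -> X -> Prop) (Hpo : is_porder le) :
  (* existence *)
  (exists (Xb : Type) (leb : Xb -> Xb -> Prop) (iota : X -> Xb),
      directed_completion le leb iota) /\
  (* uniqueness up to unique isomorphism *)
  (forall (X1 : Type) (le1 : X1 -> X1 -> Prop) (i1 : X -> X1)
          (X2 : Type) (le2 : X2 -> X2 -> Prop) (i2 : X -> X2),
      directed_completion le le1 i1 -> directed_completion le le2 i2 ->
      (exists phi : X1 -> X2, order_iso le1 le2 phi /\ forall x, phi (i1 x) = i2 x) /\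
      (forall phi psi : X1 -> X2,
          order_iso le1 le2 phi -> (forall x, phi (i1 x) = i2 x) ->
          order_iso le1 le2 psi -> (forall x, psi (i1 x) = i2 x) ->
          forall y, phi y = psi y)) /\
  (* (i) and (ii) for every directed completion *)
  (forall (Xb : Type) (leb : Xb -> Xb -> Prop) (iota : X -> Xb),
      directed_completion le leb iota ->
      (forall xb : Xb,
          tip_is leb (fun y => (exists a, y = iota a) /\ leb y xb) xb) /\
      (forall (Z : Type) (leZ : Z -> Z -> Prop), is_dcpo leZ ->
       forall T : X -> Z, Mcp le leZ T ->
       forall Tb : Xb -> Z, Mcp leb leZ Tb -> (forall x, Tb (iota x) = T x) ->
       forall xb : Xb,
         is_sup leZ (fun z => exists x, leb (iota x) xb /\ z = T x) (Tb xb))) /\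
  (* (iii) explicit realization *)
  (directed_completion le (leXb le Hpo) (iotaXb le Hpo) /\
   forall A : Yset le,
     (XbarP le Hpo A <->
        has_tip (leY le) (fun B => exists a, proj1_sig A a /\ B = iotaY le Hpo a)) /\
     (has_tip (leY le) (fun B => exists a, proj1_sig A a /\ B = iotaY le Hpo a) ->
        tip_is (leY le) (fun B => exists a, proj1_sig A a /\ B = iotaY le Hpo a) A)).
Proof.

  split; [exists (XbarT le Hpo), (leXb le Hpo), (iotaXb le Hpo); apply Xb_completion|].
  split; [intros X1 le1 i1 X2 le2 i2 C1 C2; apply (comp_unique le le1 i1 le2 i2 C1 C2)|].
  split.
  - intros Xb leb iota HC. split.
    + apply (comp_tip le leb iota Hpo HC).
    + intros; eapply (comp_ext le leb iota Hpo HC); eauto.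
  - split; [apply Xb_completion|]. intros A. split; [split|].
    + intros HA. exists A. split; [apply (G_tip le Hpo A HA)|].
      intros y Hy; apply (G_below le Hpo A y Hy).
    + intros [t Ht]. apply (proj2 (tip_char le Hpo A t Ht)).
    + intros [t Ht]. destruct (tip_char le Hpo A t Ht) as [E _]. subst t; exact Ht.
Qed.
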